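(* Under the standing assumptions below, the solution operator $S:V^*\to V$, $u\mapsto y$, of the variational inequality (VI) is pointwise-a.e. convex: for all $u_1,u_2\in V^*$ and all $\lambda\in[0,1]$, $$S(\lambda u_1+(1-\lambda)u_2)\le\lambda S(u_1)+(1-\lambda)S(u_2)\quad\mu\text{-a.e. in }\Omega.$$
   Context: Standing assumptions: (i) $(\Omega,\Sigma,\mu)$ is a complete finite measure space with real Lebesgue spaces $L^p(\Omega)$, $1\le p\le\infty$. (ii) $V$ is a real separable Hilbert space with $V\subset L^q(\Omega)$, the embedding $V\hookrightarrow L^q(\Omega)$ continuous, compact and dense, for a fixed $q\in[2,\infty]$; moreover $[v]_{a_1}^{a_2}:=\min(a_2,\max(a_1,v))$ (pointwise a.e.) belongs to $V$ for all $v\in V$ and all $a_1,a_2\in[-\infty,\infty]$ with $a_1\le0\le a_2$. (iii) $U:=L^s(\Omega)$ with fixed $s\in(1,\infty)$, $s\ge q'$ (where $1/q+1/q'=1$), identified with a subset of $V^*$ via $L^s(\Omega)\cong L^{s'}(\Omega)^*\hookrightarrow L^q(\Omega)^*\hookrightarrow V^*$. (iv) $A:V\to V^*$ is linear and continuous with $\langle Av,v\rangle_V\ge c\|v\|_V^2$ for all $v\in V$ and some $c>0$, and $\min(\langle Av,[v]_{a_1}^{a_2}\rangle_V,\langle A[v]_{a_1}^{a_2},v\rangle_V)\ge\langle A[v]_{a_1}^{a_2},[v]_{a_1}^{a_2}\rangle_V$ for all $v\in V$ and all $a_1\le0\le a_2$ in $[-\infty,\infty]$. (v) $f:\mathbb{R}\to\mathbb{R}$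 is nondecreasing, globally Lipschitz and concave, identified with $f:V\to V^*$, $\langle f(v),w\rangle_V:=(f(v),w)_{L^2(\Omega)}$. (vi) $K\subset V$ is nonempty, closed, convex with: $v\in K$, $z\in V$ $\Rightarrow$ $v+\max(0,z)\in K$; and $v_1,v_2\in K\Rightarrow\min(v_1,v_2)\in K$. (VI): for $u\in V^*$ find $y\in K$ with $\langle Ay+f(y)-u,v-y\rangle_V\ge0$ for all $v\in K$. It is known that (VI) has a unique solution $S(u)$ for every $u\in V^*$ and that $S:V^*\to V$ is globally Lipschitz. *)

(* Defs.v *)
From HB Require Import structures.
From mathcomp Require Import all_boot all_order all_algebra.
From mathcomp Require Import all_classical all_reals all_analysis.
Set Implicit Arguments. Unset Strict Implicit. Unset Printing Implicit Defensive.
Import Order.TTheory GRing.Theory Num.Theory.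
Import numFieldNormedType.Exports.
Local Open Scope classical_set_scope.
Local Open Scope ring_scope.

Section Defs.
Context {R : realType}.

(* pointwise truncation [t]_{a1}^{a2} = min(a2, max(a1, t)) with a1,a2 in
   [-oo,+oo]; the value is real whenever a1 <= 0 <= a2. *)
Definition clamp (a1 a2 : \bar R) (t : R) : R :=
  fine (Order.min a2 (Order.max a1 t%:E)).

Definition hilbert_inner (V : completeNormedModType R) (ip : V -> V -> R) :=
  [/\ forall a v w z, ip (a *: v + w) z = a * ip v z + ip w z,
      forall v w, ip v w = ip w v &
      forall v, `|v| = Num.sqrt (ip v v)].

Definition separable (V : completeNormedModType R) :=
  exists D : set V, countable D /\ closure D = setT.

Definition dual_elt (V : completeNormedModType R) (u : V -> R) :=
  (forall a v w, u (a *: v + w) = a * u v + u w) /\ continuous u.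

Context {d : measure_display} {T : measurableType d}.
Variable mu : {finite_measure set T -> \bar R}.

Definition inLq (q : \bar R) (g : T -> R) :=
  measurable_fun setT g /\ ('N[mu]_q[EFin \o g] < +oo)%E.

Definition Lq_embedding (q : \bar R) (V : completeNormedModType R)
    (iota : V -> T -> R) :=
  (forall v, inLq q (iota v)) /\
  [/\ forall a v w, iota (a *: v + w) = (fun x => a * iota v x + iota w x) %[ae mu],
      forall v w, iota v = iota w %[ae mu] -> v = w,
      (exists C : R, forall v, ('N[mu]_q[EFin \o iota v] <= (C * `|v|)%R%:E)%E),
      (forall (vn : nat -> V) (B : R), (forall n, `|vn n| <= B) ->
         exists (phi : nat -> nat) (g : T -> R),
           {homo phi : m n / (m < n)%N} /\ inLq q g /\
           forall e : R, 0 < e -> exists N : nat, forall n, (N <= n)%N ->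
             ('N[mu]_q[EFin \o (fun x => (iota (vn (phi n)) x - g x)%R)] < e%:E)%E) &
      forall g, inLq q g -> forall e : R, 0 < e -> exists v,
        ('N[mu]_q[EFin \o (fun x => (g x - iota v x)%R)] < e%:E)%E].

Definition trunc_closed (V : completeNormedModType R) (iota : V -> T -> R) :=
  forall (v : V) (a1 a2 : \bar R), (a1 <= 0)%E -> (0 <= a2)%E ->
    exists w : V, iota w = (fun x => clamp a1 a2 (iota v x)) %[ae mu].

(* (iv): A : V -> V^* given by the bilinear form a v w = <A v, w>_V. *)
Definition A_hyp (V : completeNormedModType R) (iota : V -> T -> R)
    (a : V -> V -> R) :=
  [/\ forall s v w z, a (s *: v + w) z = s * a v z + a w z,
      forall s v w z, a z (s *: v + w) = s * a z v + a z w,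
      (exists M : R, forall v w, `|a v w| <= M * `|v| * `|w|),
      (exists c : R, 0 < c /\ forall v, a v v >= c * `|v| ^+ 2) &
      forall (v w : V) (a1 a2 : \bar R), (a1 <= 0)%E -> (0 <= a2)%E ->
        iota w = (fun x => clamp a1 a2 (iota v x)) %[ae mu] ->
        Order.min (a v w) (a w v) >= a w w].

Definition f_hyp (f : R -> R) :=
  [/\ {homo f : x y / x <= y},
      (exists L : R, forall x y, `|f x - f y| <= L * `|x - y|) &
      forall x y l, 0 <= l <= 1 -> l * f x + (1 - l) * f y <= f (l * x + (1 - l) * y)].

Definition K_hyp (V : completeNormedModType R) (iota : V -> T -> R)
    (K : set V) :=
  [/\ K !=set0, closed K,
      forall v w l, K v -> K w -> 0 <= l <= 1 -> K (l *: v + (1 - l) *: w),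
      forall v z w, K v -> iota w = (fun x => Order.max 0 (iota z x)) %[ae mu] ->
        K (v + w) &
      forall v1 v2 w, K v1 -> K v2 ->
        iota w = (fun x => Order.min (iota v1 x) (iota v2 x)) %[ae mu] -> K w].

(* y solves (VI) with right-hand side u:
   y in K and <A y + f(y) - u, v - y> >= 0 for all v in K, where
   <f(y), w> = \int f(y) w dmu. *)
Definition VI_sol (V : completeNormedModType R) (iota : V -> T -> R)
    (a : V -> V -> R) (f : R -> R) (K : set V) (u : V -> R) (y : V) :=
  K y /\ forall v, K v ->
    0 <= a y (v - y) + Rintegral mu setT (fun x => f (iota y x) * iota (v - y) x)
         - u (v - y).

End Defs.

(* Main.v *)
Require Import Defs.
From HB Require Import structures.
From mathcomp Require Import all_boot all_order all_algebra.
From mathcomp Require Import all_classical all_reals all_analysis.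
From mathcomp Require Import measurable_realfun.
From mathcomp Require Import ring lra.
Import Order.TTheory GRing.Theory Num.Theory.
Import numFieldNormedType.Exports.
Local Open Scope classical_set_scope.
Local Open Scope ring_scope.
Set Implicit Arguments. Unset Strict Implicit.

Lemma inLq_L2 (R : realType) (d : measure_display) (T : measurableType d)
    (mu : {finite_measure set T -> \bar R}) (q : \bar R) (g : T -> R) :
  (2%:E <= q)%E -> inLq mu q g -> g \in Lfun mu 2%:E.
Proof.
move=> q2 [mg ng].
have q1 : (1 <= q)%E by apply: le_trans q2; rewrite lee_fin ler1n.
apply: (@Lfun_subset _ _ _ mu 2%:E q _ q1) => //.
- by rewrite lee_fin ler1n.
- exact: fin_num_measure.
- by rewrite inE; apply/andP; split; rewrite inE.
Qed.

Lemma prod_integrable (R : realType) (d : measure_display) (T : measurableType d)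
    (mu : {finite_measure set T -> \bar R}) (q : \bar R) (f : R -> R) (g h : T -> R) :
  (2%:E <= q)%E -> f_hyp f -> inLq mu q g -> inLq mu q h ->
  mu.-integrable setT (EFin \o (fun x => f (g x) * h x)).
Proof.
move=> q2 [fnd [L fL] _] Lg Lh.
have mf : measurable_fun setT f by apply: nondecreasing_measurable.
have [mg _] := Lg; have [mh _] := Lh.
have ig := Lfun2_integrable_sqr (inLq_L2 q2 Lg).
have ih := Lfun2_integrable_sqr (inLq_L2 q2 Lh).
pose c : R := `|f 0|.
have iG : mu.-integrable setT (EFin \o (fun x => (c + `|L|) + ((c + `|L|) * g x ^+ 2 + (c + `|L|) * h x ^+ 2))).
  have iF : mu.-integrable setT ((EFin \o cst (c + `|L|)%R) \+ ((fun x => (c + `|L|)%R%:E * (EFin \o (fun x => (g x ^+ 2)%R)) x) \+ (fun x => (c + `|L|)%R%:E * (EFin \o (fun x => (h x ^+ 2)%R)) x)))%E.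
    apply: integrableD => //; first exact: finite_measure_integrable_cst.
    by apply: integrableD => //; apply: integrableZl.
  by apply: eq_integrable iF => // x _.
apply: le_integrable iG => //.
  apply/measurable_EFinP; apply: measurable_funM => //.
  exact: measurableT_comp.
move=> x _ /=.
have h1 : `|f (g x) - f 0| <= L * `|g x - 0| := fL _ _.
rewrite subr0 in h1.
have h2 : `|f (g x)| <= c + `|L| * `|g x|.
  apply: (le_trans (y := `|f 0| + `|f (g x) - f 0|)).
    by rewrite -[X in `|X| <= _](subrKC (f 0)); exact: ler_normD.
  rewrite lerD2l (le_trans h1)// ler_wpM2r// real_ler_norm//; exact: num_real.
rewrite lee_fin.
have c0 : 0 <= c by exact: normr_ge0.
have L0 : 0 <= `|L| by exact: normr_ge0.
set G := (X in _ <= `|X|).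
have g2 := sqr_ge0 (g x). have h2' := sqr_ge0 (h x).
rewrite [`|G|]ger0_norm; last by rewrite /G; nra.
rewrite normrM /G.
have gg : `|g x| ^+ 2 = g x ^+ 2 by rewrite real_normK// num_real.
have hh : `|h x| ^+ 2 = h x ^+ 2 by rewrite real_normK// num_real.
rewrite -gg -hh.
have ga : 0 <= `|g x| by exact: normr_ge0.
have ha : 0 <= `|h x| by exact: normr_ge0.
have fa : 0 <= `|f (g x)| by exact: normr_ge0.
have e1 : `|f (g x)| * `|h x| <= (c + `|L| * `|g x|) * `|h x| by apply: ler_wpM2r.
have e2 : `|h x| <= 1 + `|h x| ^+ 2 by nra.
have e3 : `|g x| * `|h x| <= `|g x| ^+ 2 + `|h x| ^+ 2 by nra.
have e4 : c * `|h x| <= c * (1 + `|h x| ^+ 2) by apply: ler_wpM2l.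
have e5 : `|L| * (`|g x| * `|h x|) <= `|L| * (`|g x| ^+ 2 + `|h x| ^+ 2) by apply: ler_wpM2l.
have e6 : 0 <= c * `|g x| ^+ 2 by nra.
have e7 : 0 <= `|L| * (1 + `|h x| ^+ 2) by nra.
nra.
Qed.

Lemma clamp0y (R : realType) (t : R) : clamp 0%E +oo%E t = Order.max 0 t.
Proof. by rewrite /clamp minye -EFin_max. Qed.

Lemma Rint_ae (R : realType) (d : measure_display) (T : measurableType d)
    (mu : {measure set T -> \bar R}) (F G : T -> R) :
  measurable_fun setT F -> measurable_fun setT G ->
  (\forall x \ae mu, F x = G x) -> Rintegral mu setT F = Rintegral mu setT G.
Proof.
move=> mF mG FG; rewrite /Rintegral; congr fine.
apply: ae_eq_integral => //; try exact/measurable_EFinP.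
by apply: filterS FG => x /= ->.
Qed.

Lemma Rint_ae_le0 (R : realType) (d : measure_display) (T : measurableType d)
    (mu : {measure set T -> \bar R}) (G : T -> R) :
  measurable_fun setT G -> mu.-integrable setT (EFin \o G) ->
  (\forall x \ae mu, G x <= 0) -> Rintegral mu setT G <= 0.
Proof.
move=> mG iG G0; rewrite /Rintegral; apply: fine_le0.
have mM : measurable_fun setT (fun x => Order.min (G x) 0).
  exact: (measurable_minr mG (measurable_cst _)).
rewrite (ae_eq_integral (EFin \o (fun x => Order.min (G x) 0))) //.
- rewrite -(integral0 mu setT); apply: le_integral => //.
  + apply: le_integrable iG => //; first exact/measurable_EFinP.
    move=> x _ /=; rewrite lee_fin /Order.min; case: ifPn => // _.
    by rewrite normr0 normr_ge0.
  + exact: integrable0.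
  + move=> x _ /=; rewrite lee_fin /Order.min; case: ifPn => // /ltW //.
- exact/measurable_EFinP.
- exact/measurable_EFinP.
- apply: filterS G0 => x Gx _ /=; rewrite /Order.min; case: ifPn => // h.
  by congr EFin; apply/eqP; rewrite eq_le Gx /= leNgt.
Qed.

Lemma maxmin (R : realType) (Y Z : R) : Y - Order.max 0 (Y - Z) = Order.min Y Z.
Proof.
rewrite /Order.max /Order.min; case: ifPn => h1; case: ifPn => h2;
  rewrite -?leNgt in h1 h2; lra.
Qed.
Lemma max0_le (R : realType) (t : R) : Order.max 0 t = 0 -> t <= 0.
Proof. rewrite /Order.max; case: ifPn => h1; rewrite -?leNgt in h1; lra. Qed.
Lemma max0_ge (R : realType) (t : R) : 0 <= Order.max 0 t.
Proof. rewrite /Order.max; case: ifPn => h1; rewrite -?leNgt in h1; lra. Qed.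
Lemma max0_pos (R : realType) (t : R) : 0 < Order.max 0 t -> Order.max 0 t = t.
Proof. rewrite /Order.max; case: ifPn => h1; rewrite -?leNgt in h1; lra. Qed.
Lemma min_lel (R : realType) (x y : R) : Order.min x y <= x.
Proof. rewrite /Order.min; case: ifPn => h1; rewrite -?leNgt in h1; lra. Qed.

Lemma intZ (R : realType) (d : measure_display) (T : measurableType d)
    (mu : {measure set T -> \bar R}) (k : R) (F : T -> R) :
  mu.-integrable setT (EFin \o F) -> mu.-integrable setT (EFin \o (fun x => k * F x)).
Proof.
move=> iF; have := integrableZl measurableT k iF; apply: eq_integrable => // x _ /=; rewrite ?EFinM ?EFinD ?EFinB.
Qed.

Lemma intD (R : realType) (d : measure_display) (T : measurableType d)
    (mu : {measure set T -> \bar R}) (F G : T -> R) :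
  mu.-integrable setT (EFin \o F) -> mu.-integrable setT (EFin \o G) ->
  mu.-integrable setT (EFin \o (fun x => F x + G x)).
Proof.
move=> iF iG; have := integrableD measurableT iF iG; apply: eq_integrable => // x _ /=; rewrite ?EFinM ?EFinD ?EFinB.
Qed.

Lemma intB (R : realType) (d : measure_display) (T : measurableType d)
    (mu : {measure set T -> \bar R}) (F G : T -> R) :
  mu.-integrable setT (EFin \o F) -> mu.-integrable setT (EFin \o G) ->
  mu.-integrable setT (EFin \o (fun x => F x - G x)).
Proof.
move=> iF iG; have := integrableB measurableT iF iG; apply: eq_integrable => // x _ /=; rewrite ?EFinM ?EFinD ?EFinB.
Qed.

Theorem mainTheorem8 (R : realType) (d : measure_display) (T : measurableType d)
    (mu : {finite_measure set T -> \bar R}) (q : \bar R)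
    (V : completeNormedModType R) (ip : V -> V -> R) (iota : V -> T -> R)
    (a : V -> V -> R) (f : R -> R) (K : set V) :
  measure_is_complete mu ->
  (2%:E <= q)%E ->
  hilbert_inner ip -> separable V ->
  Lq_embedding mu q iota -> trunc_closed mu iota ->
  A_hyp mu iota a -> f_hyp f -> K_hyp mu iota K ->
  forall (u1 u2 : V -> R) (l : R) (y1 y2 y : V),
    dual_elt u1 -> dual_elt u2 -> 0 <= l <= 1 ->
    VI_sol mu iota a f K u1 y1 -> VI_sol mu iota a f K u2 y2 ->
    VI_sol mu iota a f K (fun v => l * u1 v + (1 - l) * u2 v) y ->
    \forall x \ae mu, iota y x <= l * iota y1 x + (1 - l) * iota y2 x.
Proof.
move=> _ q2 _ _ [Lq [iotaL _ _ _ _]] trunc [aL1 aL2 _ [c [c0 coer]] atr] fh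
  [_ _ Kconv Kmax Kmin] u1 u2 l y1 y2 y [u1L _] [u2L _] l01 [Ky1 V1] [Ky2 V2] [Ky Vy].
have /andP[l0 l1] := l01.
have a0r v : a v 0 = 0 by have := aL2 1 0 0 v; rewrite scale1r addr0; lra.
have a0l v : a 0 v = 0 by have := aL1 1 0 0 v; rewrite scale1r addr0; lra.
have aNr v w : a v (- w) = - a v w.
  by have := aL2 (-1) w 0 v; rewrite scaleN1r addr0 a0r; lra.
have aBl v z w : a (v - z) w = a v w - a z w.
  by have := aL1 (-1) z v w; rewrite scaleN1r addrC; lra.
have aZl w : a (l *: y1 + (1 - l) *: y2) w = l * a y1 w + (1 - l) * a y2 w.
  have := aL1 l y1 ((1 - l) *: y2) w; have := aL1 (1 - l) y2 0 w.
  rewrite addr0 a0l; lra.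
have uN (u : V -> R) : (forall s v w, u (s *: v + w) = s * u v + u w) ->
    forall w, u (- w) = - u w.
  move=> uL w; have := uL 1 0 0; have := uL (-1) w 0.
  rewrite scale1r scaleN1r !addr0; lra.
have i0 : \forall x \ae mu, iota 0 x = 0.
  by apply: filterS (iotaL 1 0 0) => x /(_ I); rewrite scale1r addr0; lra.
have iB v z : \forall x \ae mu, iota (v - z) x = iota v x - iota z x.
  by apply: filterS (iotaL (-1) z v) => x /(_ I); rewrite scaleN1r addrC; lra.
have iN w : \forall x \ae mu, iota (- w) x = - iota w x.
  apply: filterS2 (iotaL (-1) w 0) i0 => x /(_ I).
  rewrite scaleN1r addr0; lra.
set z := l *: y1 + (1 - l) *: y2.
have iZ : \forall x \ae mu, iota z x = l * iota y1 x + (1 - l) * iota y2 x.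
  apply: filterS3 (iotaL l y1 ((1 - l) *: y2)) (iotaL (1 - l) y2 0) i0.
  move=> x /(_ I) + /(_ I); rewrite addr0; lra.
have Kz : K z by apply: Kconv.
have mi v : measurable_fun setT (iota v) by have [] := Lq v.
have mf : measurable_fun setT f.
  by case: fh => fnd _ _; apply: nondecreasing_measurable.
have [w hw] := trunc (y - z) 0%E +oo%E (lexx _) (leey _).
have hw' : \forall x \ae mu, setT x -> iota w x = Order.max 0 (iota (y - z) x).
  by apply: filterS hw => x h /h ->; rewrite clamp0y.
have Kyw1 : K (y1 + w) by apply: (Kmax y1 (y - z) w Ky1 hw').
have Kyw2 : K (y2 + w) by apply: (Kmax y2 (y - z) w Ky2 hw').
have Kmw : K (y - w).
  apply: (Kmin y z (y - w) Ky Kz).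
  apply: filterS3 hw' (iB y w) (iB y z) => x h1 h2 h3 _.
  by rewrite h2 (h1 I) h3 maxmin.
have A1 := V1 _ Kyw1; have A2 := V2 _ Kyw2; have Ay := Vy _ Kmw.
rewrite [y1 + w]addrC addrK in A1.
rewrite [y2 + w]addrC addrK in A2.
rewrite (_ : y - w - y = - w) in Ay; last by rewrite addrAC subrr add0r.
rewrite aNr !(uN _ u1L) !(uN _ u2L) in Ay.
pose F v := fun x => f (iota v x) * iota w x.
have iF v : mu.-integrable setT (EFin \o F v) by apply: prod_integrable q2 fh (Lq v) (Lq w).
have mF v : measurable_fun setT (F v).
  by apply: measurable_funM => //; apply: measurableT_comp.
have EIy : Rintegral mu setT (fun x => f (iota y x) * iota (- w) x) = - Rintegral mu setT (F y).
  rewrite -mulN1r -RintegralZl //; last exact: (iF y).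
  apply: (@Rint_ae R d T mu).
  - by apply: measurable_funM => //; apply: measurableT_comp.
  - by apply: measurable_funM => //; exact: (mF y).
  by apply: filterS (iN w) => x ->; rewrite /F; lra.
rewrite EIy in Ay.
have A1' : 0 <= a y1 w + Rintegral mu setT (F y1) - u1 w := A1.
have A2' : 0 <= a y2 w + Rintegral mu setT (F y2) - u2 w := A2.
have EJ : Rintegral mu setT (fun x => l * F y1 x + (1 - l) * F y2 x - F y x) =
    l * Rintegral mu setT (F y1) + (1 - l) * Rintegral mu setT (F y2) - Rintegral mu setT (F y).
  rewrite RintegralB //; last by apply: intD; apply: intZ.
  rewrite RintegralD //; try exact: intZ.
  by rewrite !RintegralZl.
have J0 : Rintegral mu setT (fun x => l * F y1 x + (1 - l) * F y2 x - F y x) <= 0.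
  apply: Rint_ae_le0.
  - apply: measurable_funB => //; apply: measurable_funD => //;
      by apply: measurable_funM => //.
  - by apply: intB; [apply: intD; apply: intZ|].
  case: fh => fnd _ fconc.
  apply: filterS3 iZ (iB y z) hw' => x h1 h2 h3.
  rewrite /F (h3 I) h2 h1.
  set t := iota y x - (l * iota y1 x + (1 - l) * iota y2 x).
  have t0 := max0_ge t.
  have fc := fconc (iota y1 x) (iota y2 x) l l01.
  case: (boolP (0 < Order.max 0 t)) => ht.
    have ht' := max0_pos ht; rewrite ht'.
    have fm : f (l * iota y1 x + (1 - l) * iota y2 x) <= f (iota y x).
      by apply: fnd; rewrite /t in ht ht'; lra.
    have : (l * f (iota y1 x) + (1 - l) * f (iota y2 x) - f (iota y x)) * t <= 0.
      by apply: mulr_le0_ge0; lra.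
    lra.
  rewrite -leNgt in ht.
  have -> : Order.max 0 t = 0 by lra.
  lra.
have T1 : a w w <= a (y - z) w.
  exact: le_trans (atr _ _ _ _ (lexx _) (leey _) hw) (min_lel _ _).
have C1 := coer w.
have AZ := aZl w; have AB := aBl y z w.
have p1 : 0 <= l * (a y1 w + Rintegral mu setT (F y1) - u1 w) by apply: mulr_ge0.
have p2 : 0 <= (1 - l) * (a y2 w + Rintegral mu setT (F y2) - u2 w).
  by apply: mulr_ge0 => //; lra.
have cw : c * `|w| ^+ 2 <= 0 by lra.
have w2 : `|w| ^+ 2 <= 0 by nra.
have w0 : w = 0.
  have : `|w| ^+ 2 = 0 by have := sqr_ge0 `|w|; lra.
  by move/eqP; rewrite sqrf_eq0 normr_eq0 => /eqP.
rewrite w0 in hw'.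
apply: filterS3 (@filterS2 _ _ _ _ _ _ (fun x A B => conj A B) hw' i0) (iB y z) iZ.
move=> x [h1 h2] h3 h4.
have := max0_le (etrans (esym (h1 I)) h2).
lra.
Qed.
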